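(* Suppose $(G_n\in\Delta^{n\times n})$ and $E\in\mathbb R_{\ge0}^{\mathbb N\times\mathbb N}$ satisfy $\lim_n\|\pi_nG_n-E\|_1=0$ for some permutations $\pi_n$ of $[n]$ (with $G_n$ zero-padded to an infinite array). Then $(G_n)$ quotient-converges to the grapheur $\mathsf M=\sum_{i,j}E_{i,j}\delta_{(T_i,T_j)}$, where $T_i$ are iid uniform on $[0,1]$.
   Context: $\Delta^{n\times n}$: $n\times n$ matrices with nonnegative entries summing to $1$. $(\pi G)_{i,j}=G_{\pi^{-1}(i),\pi^{-1}(j)}$; $\|\cdot\|_1$ is the entrywise $\ell_1$ norm. For $f:[n]\to[k]$, $(\rho(f)G)_{i,j}=\sum_{v\in f^{-1}(i),u\in f^{-1}(j)}G_{v,u}$; $F_{k,n}$ is a uniformly random map $[n]\to[k]$. For a random probability measure $\mathsf M$ on $[0,1]^2$, $\mathsf G_k[\mathsf M]$ is the random $k\times k$ matrix with entries $\mathsf M(I_i^{(k)}\times I_j^{(k)})$, $I_i^{(k)}=[(i-1)/k,i/k)$. $(G_n)$ quotient-converges to $\mathsf M$ if $\rho(F_{k,n})G_n\to\mathsf G_k[\mathsf M]$ in distribution for every $k$. *)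

(* Defs.v *)
From HB Require Import structures.
From mathcomp Require Import all_boot all_order all_algebra all_fingroup finmap.
From mathcomp Require Import all_classical all_reals all_analysis.
Set Implicit Arguments. Unset Strict Implicit. Unset Printing Implicit Defensive.
Import Order.TTheory GRing.Theory Num.Theory.
Import numFieldNormedType.Exports.
Local Open Scope classical_set_scope.
Local Open Scope ring_scope.

Section Defs.
Variable R : realType.

Definition in_Delta n (G : 'M[R]_n) : Prop :=
  (forall i j, 0 <= G i j) /\ \sum_(i < n) \sum_(j < n) G i j = 1.

Definition perm_act n (pi : {perm 'I_n}) (G : 'M[R]_n) : 'M[R]_n :=
  \matrix_(i, j) G (pi^-1 i)%g (pi^-1 j)%g.

Definition zeropad n (G : 'M[R]_n) (i j : nat) : R :=
  match (insub i : option 'I_n), (insub j : option 'I_n) with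
  | Some i', Some j' => G i' j'
  | _, _ => 0
  end.

Definition l1dist n (G : 'M[R]_n) (E : nat -> nat -> R) : \bar R :=
  (\esum_(p in [set: nat * nat]) (`|zeropad G p.1 p.2 - E p.1 p.2|)%:E)%E.

Definition rho n k (f : {ffun 'I_n -> 'I_k}) (G : 'M[R]_n) : 'M[R]_k :=
  \matrix_(i, j) \sum_(v | f v == i) \sum_(u | f u == j) G v u.

(* I_i^{(k)} = [(i-1)/k, i/k), here with 0-based index i : 'I_k *)
Definition Ik k (i : 'I_k) : set R :=
  `[ (i%:R / k%:R), ((i.+1)%:R / k%:R) [%classic.

Section Random.
Context d (Omega : measurableType d) (P : probability Omega R).

Definition Gk (M : Omega -> set (R * R) -> \bar R) k (w : Omega) : 'M[R]_k :=
  \matrix_(i, j) fine (M w (Ik i `*` Ik j)).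

Definition grapheur (E : nat -> nat -> R) (T : nat -> Omega -> R)
  (w : Omega) (A : set (R * R)) : \bar R :=
  (\esum_(p in [set: nat * nat])
     (E p.1 p.2)%:E * (\1_A (T p.1 w, T p.2 w))%:E)%E.

Definition uniform01 (X : Omega -> R) : Prop :=
  measurable_fun setT X /\
  forall A : set R, measurable A ->
    P (X @^-1` A) = lebesgue_measure (A `&` `[0%R, 1%R]%classic).

Definition mutually_independent (T : nat -> Omega -> R) : Prop :=
  forall (S : {fset nat}) (A : nat -> set R), (forall a, measurable (A a)) ->
    P (\bigcap_(a in [set` S]) (T a @^-1` A a)) =
    (\prod_(a <- S) P (T a @^-1` A a))%E.

Definition iid_uniform01 (T : nat -> Omega -> R) : Prop :=
  (forall a, uniform01 (T a)) /\ mutually_independent T.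

(* quotient convergence of (G_n) to the random measure M: for every k >= 1,
   rho(F_{k,n}) G_n -> G_k[M] in distribution, i.e. E[h(...)] converges for
   every bounded continuous h on k x k real matrices; F_{k,n} is uniform on
   the maps [n] -> [k]. *)
Definition quotient_converges (G : forall n, 'M[R]_n)
  (M : Omega -> set (R * R) -> \bar R) : Prop :=
  forall k : nat, (0 < k)%N ->
  forall h : 'M[R]_k -> R, continuous h -> (exists C : R, forall x, `|h x| <= C) ->
    (fun n => ((#|{ffun 'I_n -> 'I_k}|%:R)^-1 *
               \sum_(f : {ffun 'I_n -> 'I_k}) h (rho f (G n)))%:E)
      @ \oo --> (\int[P]_w (h (Gk M k w))%:E)%E.

End Random.
End Defs.

(* Main.v *)
Require Import Defs.
From HB Require Import structures.
From mathcomp Require Import all_boot all_order all_algebra all_fingroup finmap.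
From mathcomp Require Import all_classical all_reals all_analysis.
From mathcomp Require Import lra measurable_realfun.
Import Order.TTheory GRing.Theory Num.Theory.
Import numFieldNormedType.Exports.
Local Open Scope classical_set_scope.
Local Open Scope ring_scope.
Set Implicit Arguments. Unset Strict Implicit. Unset Printing Implicit Defensive.
Section S1.
Variable R : realType.

Lemma zeropad_ord n (M : 'M[R]_n) (v u : 'I_n) : zeropad M v u = M v u.
Proof. by rewrite /zeropad !valK. Qed.

Lemma zeropad_out n (M : 'M[R]_n) a b : ~ ((a < n)%N /\ (b < n)%N) -> zeropad M a b = 0.
Proof.
rewrite /zeropad => H; case: insubP => [v av _|//]; case: insubP => [u bu _|//].
by exfalso; apply: H.
Qed.

Lemma esum_box n (M : 'M[R]_n) (w : nat -> nat -> R) :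
  (forall v u, 0 <= M v u) -> (forall a b, 0 <= w a b) ->
  (\esum_(p in [set: nat * nat]) ((zeropad M p.1 p.2) * w p.1 p.2)%:E)%E
  = (\sum_(v < n) \sum_(u < n) M v u * w v u)%:E.
Proof.
move=> M0 w0.
have -> : (\esum_(p in [set: nat * nat]) ((zeropad M p.1 p.2) * w p.1 p.2)%:E)%E
  = (\esum_(p in `I_n `*` `I_n) ((zeropad M p.1 p.2) * w p.1 p.2)%:E)%E.
  rewrite [RHS]esum_mkcond; apply: eq_esum => -[a b] _.
  case: ifPn => // /negP; rewrite inE /= => H.
  by rewrite zeropad_out ?mul0r // => -[? ?]; apply: H.
rewrite esum_fset; last 2 first.
- by apply: finite_setX; apply: finite_II.
- move=> [a b] _; rewrite lee_fin /zeropad; case: insubP => [v _ _|]; last by rewrite mul0r.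
  case: insubP => [u _ _|]; last by rewrite mul0r.
  by rewrite mulr_ge0.
rewrite -(@pair_fsbig _ _ _ _ _ _ _ (fun a b => ((zeropad M a b) * w a b)%:E)); try exact: finite_II.
rewrite -sumEFin -fsbig_ord; apply: eq_bigr => v _.
rewrite -fsbig_ord -sumEFin; apply: eq_bigr => u _.
by rewrite zeropad_ord.
Qed.
End S1.

Section S2.
Variable R : realType.
Local Open Scope ereal_scope.

Lemma esum_cmp (Z F w : nat * nat -> R) (y D : R) :
  (forall p, (0 <= Z p)%R) -> (forall p, (0 <= F p)%R) ->
  (forall p, (0 <= w p <= 1)%R) ->
  \esum_(p in [set: nat * nat]) ((Z p) * w p)%:E = y%:E ->
  \esum_(p in [set: nat * nat]) (`|Z p - F p|)%:E = D%:E ->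
  (`| fine (\esum_(p in [set: nat * nat]) ((F p) * w p)%:E) - y | <= D)%R.
Proof.
move=> Z0 F0 w01 Ey ED.
have key : forall (A B : nat * nat -> R), (forall p, (0 <= A p)%R) -> (forall p, (0 <= B p)%R) ->
   \esum_(p in [set: nat * nat]) ((B p) * w p)%:E <=
   \esum_(p in [set: nat * nat]) ((A p) * w p)%:E +
   \esum_(p in [set: nat * nat]) (`|A p - B p|)%:E.
  move=> A B A0 B0; rewrite -esumD; last 2 first.
  - by move=> p _; rewrite lee_fin; case/andP: (w01 p) => ? _; rewrite mulr_ge0.
  - by move=> p _; rewrite lee_fin.
  apply: le_esum => p _; rewrite -EFinD lee_fin.
  case/andP: (w01 p) => w0 w1.
  have : (B p * w p - A p * w p <= `|A p - B p|)%R.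
    rewrite -mulrBl (le_trans (ler_norm _))// normrM (ger0_norm w0).
    by rewrite distrC -[X in (_ <= X)%R]mulr1 ler_wpM2l.
  lra.
have h1 := key Z F Z0 F0.
have h2 := key F Z F0 Z0.
rewrite Ey ED -EFinD in h1.
have e0 : 0 <= \esum_(p in [set: nat * nat]) ((F p) * w p)%:E.
  apply: esum_ge0 => p _; rewrite lee_fin; case/andP: (w01 p) => ? _; exact: mulr_ge0.
have fin : \esum_(p in [set: nat * nat]) ((F p) * w p)%:E \is a fin_num.
  by rewrite ge0_fin_numE//; apply: (le_lt_trans h1); rewrite ltry.
have ED' : \esum_(p in [set: nat * nat]) (`|F p - Z p|)%:E = D%:E.
  by rewrite -ED; apply: eq_esum => p _; rewrite distrC.
move: h1 h2; rewrite -(fineK fin) Ey ED' -EFinD !lee_fin => h1 h2.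
rewrite ler_norml; apply/andP; split; lra.
Qed.
End S2.

Section S4.
Variable R : realType.
Lemma mx_cvg (m n : nat) (A : nat -> 'M[R]_(m,n)) (B : 'M[R]_(m,n)) (dl : nat -> R) :
  dl @ \oo --> 0 ->
  (\forall N \near \oo, forall i j, `|A N i j - B i j| <= dl N) -> A @ \oo --> B.
Proof.
move=> dc HA; apply/cvgrPdist_le => eps e0.
have Hd0 : \forall t \near \oo, `|0 - dl t| <= eps by move/cvgrPdist_le: dc; apply.
apply: (filterS2 _ _ HA Hd0) => N HN Hd.
rewrite (_ : `|B - A N| = mx_norm (B - A N)) // mx_normrE.
apply: bigmax_le; first exact: ltW.
move=> ij _; rewrite !mxE distrC (le_trans (HN _ _))//.
by rewrite (le_trans _ Hd)// sub0r normrN ler_norm.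
Qed.
End S4.

Section S3.
Variable R : realType.

Definition cls k (x : R) : option 'I_k := [pick i : 'I_k | `[< Ik i x >] ].

Lemma IkP k (i : 'I_k) (x : R) : Ik i x <-> (i%:R <= x * k%:R < i.+1%:R).
Proof.
have k0 : (0 < k%:R :> R) by rewrite ltr0n; case: i => i /=; case: k => //.
rewrite /Ik /= in_itv /= ler_pdivrMr // ltr_pdivlMr //.
Qed.

Lemma Ik_disj k (i j : 'I_k) (x : R) : Ik i x -> Ik j x -> i = j.
Proof.
move=> /IkP /andP[a b] /IkP /andP[c d]; apply/val_inj.
have h1 : (i < j.+1)%N.
  have : (i%:R < j.+1%:R :> R) by exact: (le_lt_trans a d).
  by rewrite ltr_nat.
have h2 : (j < i.+1)%N.
  have : (j%:R < i.+1%:R :> R) by exact: (le_lt_trans c b).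
  by rewrite ltr_nat.
by apply/eqP; rewrite eqn_leq -(ltnS i j) -(ltnS j i) h1 h2.
Qed.

Lemma cls_Some k (x : R) (i : 'I_k) : (cls k x == Some i) = `[< Ik i x >].
Proof.
rewrite /cls; case: pickP => [j /asboolP Hj|H].
  apply/eqP/asboolP => [[<-]//|Hi]; congr Some; exact: Ik_disj Hj Hi.
by rewrite H.
Qed.

Lemma mem_bigsetU n (F : 'I_n -> set R) x :
  (\big[setU/set0]_(i < n) F i) x <-> exists i, F i x.
Proof.
elim: n F => [|n IH] F.
  by rewrite big_ord0; split => [//|[[]]].
rewrite big_ord_recr /=; split => [[/IH [i Hi]|H]|[i Hi]].
- by exists (widen_ord (leqnSn n) i).
- by exists ord_max.
- case: (ltnP i n) => iN.
    left; apply/IH; exists (Ordinal iN); move: Hi; congr F; exact: val_inj.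
  right; have <- : i = ord_max; last by [].
  by apply/val_inj/eqP; rewrite /= eqn_leq iN andbT -ltnS ltn_ord.
Qed.

Definition Uk k : set R := \big[setU/set0]_(i < k) Ik i.

Definition Bset k (o : option 'I_k) : set R :=
  match o with Some i => Ik i | None => ~` Uk k end.

Lemma cls_Bset k (x : R) o : (cls k x = o) <-> Bset o x.
Proof.
case: o => [i|] /=.
  by split => [/eqP|H]; [rewrite cls_Some => /asboolP | apply/eqP; rewrite cls_Some; apply/asboolP].
rewrite /cls; case: pickP => [j /asboolP Hj|H]; split => //.
  by move=> /(_ (proj2 (mem_bigsetU _ _) (ex_intro _ j Hj))).
by move=> _ /mem_bigsetU [i Hi]; move: (H i) => /asboolP; apply.
Qed.

Lemma Ik_meas k (i : 'I_k) : measurable (Ik i : set R).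
Proof. exact: measurable_itv. Qed.

Lemma Bset_meas k o : measurable (@Bset k o).
Proof.
case: o => [i|] /=; first exact: Ik_meas.
apply: measurableC; rewrite /Uk; apply: bigsetU_measurable => i _; exact: Ik_meas.
Qed.

Lemma Ik_sub k (i : 'I_k) : (Ik i : set R) `<=` `[0, 1]%classic.
Proof.
have k0 : (0 < k%:R :> R) by rewrite ltr0n; case: i => i /=; case: k => //.
move=> x /IkP /andP[a b]; rewrite /= in_itv /=; apply/andP; split.
  by rewrite -(pmulr_lge0 _ k0) (le_trans _ a).
rewrite -(ler_pM2r k0) mul1r (le_trans (ltW b))// ler_nat; exact: ltn_ord.
Qed.

Lemma leb_Ik k (i : 'I_k) : lebesgue_measure (Ik i : set R) = (k%:R^-1)%:E.
Proof.
have k0 : (0 < k%:R :> R) by rewrite ltr0n; case: i => i /=; case: k => //.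
rewrite /Ik lebesgue_measure_itv /= lte_fin ltr_pM2r ?invr_gt0 // ltr_nat ltnSn.
by rewrite -EFinB -mulrBl -natrB ?leqnSn // subSnn mul1r.
Qed.

Lemma leb_Uk k : (0 < k)%N -> lebesgue_measure (Uk k) = 1%E.
Proof.
move=> k0; rewrite /Uk measure_semi_additive_ord //.
- rewrite (eq_bigr (fun _ => (k%:R^-1)%:E)); last by move=> i _; exact: leb_Ik.
  rewrite sumEFin sumr_const card_ord -[X in X%:E]mulr_natr mulVf //.
  by rewrite pnatr_eq0 -lt0n.
- by move=> i; exact: Ik_meas.
- by apply/trivIsetP => i j _ _ ij; apply/seteqP; split => // x [/Ik_disj H /H] /eqP; rewrite (negbTE ij).
- by apply: bigsetU_measurable => i _; exact: Ik_meas.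
Qed.
End S3.

Section Prob.
Variables (R : realType) (d : measure_display) (Omega : measurableType d)
  (P : probability Omega R) (T : nat -> Omega -> R).
Hypothesis HT : iid_uniform01 P T.
Variable K : nat.
Local Notation k := K.+1.

Lemma mpre a (B : set R) : measurable B -> measurable (T a @^-1` B).
Proof. by move=> mB; rewrite -[_ @^-1` _]setTI; apply: (HT.1 a).1. Qed.

Lemma PT_Ik a (i : 'I_k) : P (T a @^-1` Ik i) = (k%:R^-1)%:E.
Proof.
rewrite (HT.1 a).2; last exact: Ik_meas.
rewrite setIidl; last exact: Ik_sub.
exact: leb_Ik.
Qed.

Lemma PT_U a : P (T a @^-1` Uk k) = 1%E.
Proof.
rewrite (HT.1 a).2; last by apply: bigsetU_measurable => i _; exact: Ik_meas.
rewrite setIidl ?leb_Uk //.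
by move=> x /mem_bigsetU [i /Ik_sub].
Qed.

Definition q (o : option 'I_k) : \bar R := if o is Some _ then (k%:R^-1)%:E else 0%E.

Lemma PT_B a o : P (T a @^-1` Bset o) = q o.
Proof.
case: o => [i|] /=; first exact: PT_Ik.
rewrite -preimage_setC probability_setC ?PT_U ?subee //.
by apply: mpre; apply: bigsetU_measurable => i _; exact: Ik_meas.
Qed.

Definition cf n (w : Omega) : {ffun 'I_n -> option 'I_k} := [ffun v : 'I_n => cls k (T v w)].

Definition Scf n (c : {ffun 'I_n -> option 'I_k}) : set Omega :=
  \bigcap_(v in [set: 'I_n]) T v @^-1` Bset (c v).

Lemma cf_Scf n c w : (cf n w = c) <-> @Scf n c w.
Proof.
split => [<- v _|H]; first by rewrite /= ffunE; apply/cls_Bset.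
by apply/ffunP => v; rewrite ffunE; apply/cls_Bset; apply: H.
Qed.

Lemma Scf_meas n c : measurable (@Scf n c).
Proof.
apply: fin_bigcap_measurable; first exact: finite_finset.
by move=> v _; apply: mpre; exact: Bset_meas.
Qed.

Lemma P_Scf n c : P (@Scf n c) = (\prod_(v < n) q (c v))%E.
Proof.
pose A (a : nat) : set R := if insub a is Some v then Bset (c v) else setT.
have mA a : measurable (A a) by rewrite /A; case: insubP => [v _ _|_]; [exact: Bset_meas|exact: measurableT].
have := HT.2 (seq_fset tt (iota 0 n)) A mA.
have memS a : (a \in seq_fset tt (iota 0 n)) = (a < n)%N by rewrite seq_fsetE mem_iota add0n.
have -> : \bigcap_(a in [set` seq_fset tt (iota 0 n)]) T a @^-1` A a = @Scf n c.
  apply/seteqP; split => w H.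
    move=> v _; have Sv : (val v \in seq_fset tt (iota 0 n)) by rewrite memS ltn_ord.
    by have := H (val v) Sv; rewrite /A valK.
  move=> a aS; have an : (a < n)%N by rewrite -memS; exact: aS.
  rewrite /A; case: insubP => [u _ ua|]; last by rewrite an.
  have -> : u = Ordinal an by apply: val_inj.
  exact: (H (Ordinal an) I).
move=> ->.
rewrite (perm_big _ (seq_fset_perm _ _)) undup_id ?iota_uniq //.
have -> : iota 0 n = index_iota 0 n by rewrite /index_iota subn0.
rewrite big_mkord.
by apply: eq_bigr => v _; rewrite /A valK PT_B.
Qed.

Definition Ycomb n (M : 'M[R]_n) (c : {ffun 'I_n -> option 'I_k}) : 'M[R]_k :=
  \matrix_(i, j) \sum_(v < n) \sum_(u < n) M v u * ((c v == Some i) && (c u == Some j))%:R.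

Lemma hY_sum n (M : 'M[R]_n) (h : 'M[R]_k -> R) w :
  h (Ycomb M (cf n w)) = \sum_c h (Ycomb M c) * \1_(@Scf n c) w.
Proof.
rewrite (bigD1 (cf n w)) //= big1 ?addr0.
  by rewrite indicE mem_set ?mulr1 //; exact/cf_Scf.
move=> c ne; rewrite indicE memNset ?mulr0 // => /cf_Scf E.
by rewrite E eqxx in ne.
Qed.

Lemma meas_hY n (M : 'M[R]_n) (h : 'M[R]_k -> R) :
  measurable_fun setT (fun w => h (Ycomb M (cf n w))).
Proof.
rewrite (_ : (fun w => _) = fun w => \sum_c h (Ycomb M c) * \1_(@Scf n c) w); last first.
  by apply: funext => w; exact: hY_sum.
apply: measurable_sum => c.
apply: measurable_realfun.measurable_funM; first exact: measurable_cst.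
apply: measurable_realfun.measurable_indic; exact: Scf_meas.
Qed.

Lemma int_hY n (M : 'M[R]_n) (h : 'M[R]_k -> R) :
  (\int[P]_w (h (Ycomb M (cf n w)))%:E =
   \sum_c (h (Ycomb M c))%:E * P (@Scf n c))%E.
Proof.
under eq_integral => w _ do rewrite hY_sum -sumEFin.
have e w : (\sum_c (h (Ycomb M c) * \1_(@Scf n c) w)%:E)%E =
    (\sum_c ((h (Ycomb M c))%:E * (\1_(@Scf n c) w)%:E))%E.
  by apply: eq_bigr => c _; rewrite EFinM.
under eq_integral => w _ do rewrite e.
rewrite integral_sum //; last first.
  by move=> c; apply: integrableZl => //; apply: integrable_indic; exact: Scf_meas.
apply: eq_bigr => c _.
rewrite integralZl //; last by apply: integrable_indic; exact: Scf_meas.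
by rewrite integral_indic //; [rewrite setIT | exact: Scf_meas].
Qed.

Definition liftf n (g : {ffun 'I_n -> 'I_k}) : {ffun 'I_n -> option 'I_k} := [ffun v => Some (g v)].
Definition unlf n (c : {ffun 'I_n -> option 'I_k}) : {ffun 'I_n -> 'I_k} := [ffun v => odflt ord0 (c v)].

Lemma Ycomb_lift n (M : 'M[R]_n) g : Ycomb M (liftf g) = rho g M.
Proof.
apply/matrixP => i j; rewrite !mxE.
transitivity (\sum_(v < n) (if g v == i then \sum_(u | g u == j) M v u else 0)); last first.
  by apply/esym; apply: big_mkcond.
apply: eq_bigr => v _; rewrite ffunE (inj_eq Some_inj); case: (g v == i) => /=.
  transitivity (\sum_(u < n) (if g u == j then M v u else 0)); last first.
    by apply/esym; apply: big_mkcond.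
  by apply: eq_bigr => u _; rewrite ffunE (inj_eq Some_inj); case: (g u == j); rewrite ?mulr1 ?mulr0.
by rewrite big1 // => u _; rewrite mulr0.
Qed.

Lemma sum_final n (M : 'M[R]_n) (h : 'M[R]_k -> R) :
  (\sum_c (h (Ycomb M c))%:E * \prod_(v < n) q (c v))%E =
  ((k%:R^-1) ^+ n * \sum_g h (rho g M))%:E.
Proof.
rewrite (bigID (fun c : {ffun 'I_n -> option 'I_k} => [forall v, c v != None])) /=.
rewrite [X in (_ + X)%E]big1 ?adde0; last first.
  move=> c /forallPn [v]; rewrite negbK => /eqP cv.
  by rewrite (bigD1 v) //= cv /= mul0e mule0.
rewrite (reindex_onto (@liftf n) (@unlf n)); last first.
  move=> c /forallP H; apply/ffunP => v; rewrite !ffunE.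
  by move: (H v); case: (c v).
rewrite (eq_bigl xpredT); last first.
  move=> g; apply/andP; split; first by apply/forallP => v; rewrite ffunE.
  by apply/eqP/ffunP => v; rewrite !ffunE.
rewrite mulr_sumr -sumEFin; apply: eq_bigr => g _.
rewrite Ycomb_lift (eq_bigr (fun _ => (k%:R^-1)%:E)); last by move=> v _; rewrite ffunE.
by rewrite prodEFin prodr_const card_ord -EFinM mulrC.
Qed.

Lemma rho_perm n (p : {perm 'I_n}) (Gm : 'M[R]_n) (g : {ffun 'I_n -> 'I_k}) :
  rho g (perm_act p Gm) = rho [ffun v => g (p v)] Gm.
Proof.
apply/matrixP => i j; rewrite !mxE.
rewrite (reindex_inj (@perm_inj _ p)) /=; apply: eq_big => v; first by rewrite ffunE.
move=> _; rewrite (reindex_inj (@perm_inj _ p)) /=; apply: eq_big => u; first by rewrite ffunE.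
by move=> _; rewrite mxE !permK.
Qed.

Lemma sum_perm n (p : {perm 'I_n}) (Gm : 'M[R]_n) (h : 'M[R]_k -> R) :
  \sum_(g : {ffun 'I_n -> 'I_k}) h (rho g (perm_act p Gm)) =
  \sum_(f : {ffun 'I_n -> 'I_k}) h (rho f Gm).
Proof.
rewrite [RHS](reindex (fun g : {ffun 'I_n -> 'I_k} => [ffun v => g (p v)])) /=.
  by apply: eq_bigr => g _; rewrite rho_perm.
exists (fun f : {ffun 'I_n -> 'I_k} => [ffun v => f ((p^-1)%g v)]) => g _;
  apply/ffunP => v; rewrite !ffunE ?permKV ?permK //.
Qed.

Lemma Ycomb_entry n (M : 'M[R]_n) w i j :
  Ycomb M (cf n w) i j =
  \sum_(v < n) \sum_(u < n) M v u * \1_(Ik i `*` Ik j) (T v w, T u w).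
Proof.
rewrite mxE; apply: eq_bigr => v _; apply: eq_bigr => u _.
rewrite indicE in_setX /= !ffunE !cls_Some.
by congr (_ * (_ && _)%:R); apply/idP/idP; rewrite inE.
Qed.

Variable E : nat -> nat -> R.

Lemma Gk_entry w i j :
  Gk (grapheur E T) k w i j =
  fine (\esum_(p in [set: nat * nat]) (E p.1 p.2 * \1_(Ik i `*` Ik j) (T p.1 w, T p.2 w))%:E)%E.
Proof.
rewrite /Gk /grapheur mxE; congr fine; apply: eq_esum => p _; by rewrite EFinM.
Qed.

Lemma conv_w (M : forall n, 'M[R]_n) w :
  (forall n v u, 0 <= M n v u) -> (forall a b, 0 <= E a b) ->
  (fun n => l1dist (M n) E) @ \oo --> 0%E ->
  (fun n => Ycomb (M n) (cf n w)) @ \oo --> Gk (grapheur E T) k w.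
Proof.
move=> M0 E0 /fine_cvgP [fin dc].
apply: (mx_cvg dc); move: fin; apply: filterS => n fin i j.
rewrite Gk_entry distrC.
set ind := fun p : nat * nat => \1_(Ik i `*` Ik j) (T p.1 w, T p.2 w) : R.
have ind01 p : 0 <= ind p <= 1 by rewrite /ind indicE; case: (_ \in _); rewrite ?ler01 ?lexx.
apply: (@esum_cmp R (fun p => zeropad (M n) p.1 p.2) (fun p => E p.1 p.2) ind).
- by move=> p; rewrite /zeropad; case: insubP => [v _ _|//]; case: insubP => [u _ _|//].
- by move=> p; exact: E0.
- exact: ind01.
- rewrite (@esum_box R n (M n) (fun a b => \1_(Ik i `*` Ik j) (T a w, T b w))) //.
    by rewrite Ycomb_entry.
- by rewrite /= fineK.
Qed.
End Prob.

Theorem mainTheorem9 (R : realType) (G : forall n : nat, 'M[R]_n)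
  (E : nat -> nat -> R) (pi : forall n : nat, {perm 'I_n})
  (d : measure_display) (Omega : measurableType d) (P : probability Omega R)
  (T : nat -> Omega -> R) :
  (forall n, (0 < n)%N -> in_Delta (G n)) ->
  (forall i j, 0 <= E i j) ->
  (fun n => l1dist (perm_act (pi n) (G n)) E) @ \oo --> 0%E ->
  iid_uniform01 P T ->
  quotient_converges P G (grapheur E T).
Proof.
move=> HG HE Hl HT k k0 h hc [C hC].
case: k k0 h hc hC => // K _ h hc hC.
pose M := fun n => perm_act (pi n) (G n).
have M0 n v u : 0 <= M n v u.
  case: n v u => [[]//|n] v u; rewrite /M /perm_act mxE; exact: (HG n.+1 isT).1.
have eqn n : ((#|{ffun 'I_n -> 'I_K.+1}|%:R)^-1 * \sum_(f : {ffun 'I_n -> 'I_K.+1}) h (rho f (G n)))%:E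
   = (\int[P]_w (h (Ycomb (M n) (cf T K n w)))%:E)%E.
  rewrite (int_hY HT).
  rewrite (eq_bigr (fun c => (h (Ycomb (M n) c))%:E * \prod_(v < n) q R (c v))%E); last first.
    by move=> c _; congr (_ * _)%E; exact: (P_Scf HT).
  by rewrite sum_final /M sum_perm card_ffun !card_ord natrX exprVn.
rewrite (funext eqn).
have cw w : (fun n => Ycomb (M n) (cf T K n w)) @ \oo --> Gk (grapheur E T) K.+1 w.
  exact: conv_w.
pose f_ : nat -> Omega -> \bar R := fun n w => (h (Ycomb (M n) (cf T K n w)))%:E.
pose f : Omega -> \bar R := fun w => (h (Gk (grapheur E T) K.+1 w))%:E.
have mf_ : forall n, measurable_fun [set: Omega] (f_ n).
  by move=> n; apply/measurable_realfun.measurable_EFinP; exact: (meas_hY HT).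
have mf : measurable_fun [set: Omega] f.
  apply/measurable_realfun.measurable_EFinP.
  apply: (measurable_realfun.measurable_fun_cvg (h := fun n w => h (Ycomb (M n) (cf T K n w)))).
    by move=> n; exact: (meas_hY HT).
  by move=> w _; exact: (continuous_cvg _ (hc _) (cw w)).
have ff : \forall x \ae P, setT x -> f_ ^~ x @ \oo --> f x.
  apply: aeW => w _; apply/fine_cvgP; split; first exact: nearW.
  exact: (continuous_cvg _ (hc _) (cw w)).
have ig : P.-integrable setT (EFin \o cst C) by exact: finite_measure_integrable_cst.
have fg : \forall x \ae P, forall n, setT x -> (`|f_ n x| <= (EFin \o cst C) x)%E.
  by apply: aeW => w n _; rewrite /f_ abse_EFin lee_fin /=; exact: hC.
have [_ _ Hc] := dominated_convergence measurableT mf_ mf ff ig fg.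
exact: Hc.
Qed.
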